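(* A binary matrix $A$ has at most one base that spans all other bases of $A$, both with respect to the binary setting and with respect to the boolean setting.
   Context: A set $X$ of $\{0,1\}$-vectors spans a vector $y$ in the binary (resp. boolean) sense if $y=\sum_{x\in X}c_xx$ with $c_x\in\{0,1\}$ using ordinary (resp. boolean, $1+1=1$) addition; $X$ spans a set $Y$ if it spans each vector of $Y$. A binary (resp. boolean) base of an $n\times m$ binary matrix $A$ is a set of $\{0,1\}$ column vectors of length $n$ spanning every column of $A$ in the corresponding sense, of minimum cardinality among such spanning sets. *)

(* Defs.v *)
From mathcomp Require Import all_boot all_order all_algebra.
Set Implicit Arguments. Unset Strict Implicit. Unset Printing Implicit Defensive.

(* {0,1}-vectors of length n, with false = 0 and true = 1. *)
Definition bvec (n : nat) := {ffun 'I_n -> bool}.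

(* Binary span: y is a sum, with ordinary (integer) addition, of a subfamily
   of X (coefficients c_x in {0,1}). *)
Definition binary_spans (n : nat) (X : {set bvec n}) (y : bvec n) : Prop :=
  exists2 S : {set bvec n}, S \subset X &
    forall i : 'I_n, (\sum_(x in S) nat_of_bool (x i))%N = nat_of_bool (y i).

(* Boolean span: y is a boolean sum (1 + 1 = 1, i.e. entrywise OR) of a
   subfamily of X. *)
Definition boolean_spans (n : nat) (X : {set bvec n}) (y : bvec n) : Prop :=
  exists2 S : {set bvec n}, S \subset X &
    forall i : 'I_n, [exists x in S, x i] = y i.

Definition spans_set (n : nat) (sp : {set bvec n} -> bvec n -> Prop)
  (X Y : {set bvec n}) : Prop :=
  forall y, y \in Y -> sp X y.

Definition col_vec (n m : nat) (A : 'M[bool]_(n, m)) (j : 'I_m) : bvec n :=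
  [ffun i => A i j].

Definition spans_matrix (n m : nat) (sp : {set bvec n} -> bvec n -> Prop)
  (A : 'M[bool]_(n, m)) (X : {set bvec n}) : Prop :=
  forall j : 'I_m, sp X (col_vec A j).

Definition is_base (n m : nat) (sp : {set bvec n} -> bvec n -> Prop)
  (A : 'M[bool]_(n, m)) (X : {set bvec n}) : Prop :=
  spans_matrix sp A X /\
  forall X' : {set bvec n}, spans_matrix sp A X' -> #|X| <= #|X'|.

Definition spans_all_bases (n m : nat) (sp : {set bvec n} -> bvec n -> Prop)
  (A : 'M[bool]_(n, m)) (B : {set bvec n}) : Prop :=
  is_base sp A B /\ forall B' : {set bvec n}, is_base sp A B' -> spans_set sp B B'.

(* Main.v *)
Require Import Defs.
From mathcomp Require Import all_boot all_order all_algebra.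
Set Implicit Arguments. Unset Strict Implicit. Unset Printing Implicit Defensive.

Definition vle n (x y : bvec n) := [forall i, x i ==> y i].

Lemma vle_anti n (x y : bvec n) : vle x y -> vle y x -> x = y.
Proof.
move=> /forallP h1 /forallP h2; apply/ffunP=> i.
by move: (h1 i) (h2 i); case: (x i); case: (y i).
Qed.

Lemma generic n m (A : 'M[bool]_(n, m)) (sp : {set bvec n} -> bvec n -> Prop) :
  (forall X Y : {set bvec n}, forall y, X \subset Y -> sp X y -> sp Y y) ->
  (forall (X : {set bvec n}) x, x \in X -> sp X x) ->
  (forall X Y : {set bvec n}, forall z, (forall y, y \in Y -> sp X y) -> sp Y z -> sp X z) ->
  (forall (X : {set bvec n}) y, sp X y -> sp [set x in X | vle x y] y) ->
  forall B1 B2, spans_all_bases sp A B1 -> spans_all_bases sp A B2 -> B1 = B2.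
Proof.
move=> mono refl trans loc B1 B2 [[s1 m1] a1] [[s2 m2] a2].
have sub: B1 \subset B2.
  apply/subsetP => x xB1; apply/negPn/negP => xnB2.
  have h1: sp (B1 :\ x) x.
    apply: (trans _ [set y in B2 | vle y x]); last first.
      by apply: loc; apply: (a2 B1 (conj s1 m1)).
    move=> y; rewrite inE => /andP[yB2 lyx].
    apply: (mono _ _ _ _ (loc _ _ (a1 B2 (conj s2 m2) y yB2))).
    apply/subsetP => w; rewrite !inE => /andP[wB1 lwy]; rewrite wB1 andbT.
    apply/eqP => ewx; subst w.
    by have exy := vle_anti lwy lyx; move: xnB2; rewrite exy yB2.
  have h2: spans_matrix sp A (B1 :\ x).
    move=> j; apply: (trans _ B1); last exact: s1.
    move=> y yB1; case: (eqVneq y x) => [->|ne]; first exact: h1.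
    by apply: refl; rewrite !inE ne.
  have := m1 _ h2; rewrite (cardsD1 x B1) xB1.
  by rewrite add1n ltnn.
apply/eqP; rewrite eqEcard sub /=; exact: m2.
Qed.

Lemma bool_trans n (X Y : {set bvec n}) z :
  (forall y, y \in Y -> boolean_spans X y) -> boolean_spans Y z -> boolean_spans X z.
Proof.
move=> hY [S SY hS].
have [T hT] : exists T : bvec n -> {set bvec n}, forall y,
  y \in Y -> T y \subset X /\ forall i, [exists x in T y, x i] = y i.
  apply: (fin_all_exists (P := fun y (T : {set bvec n}) => y \in Y -> T \subset X /\ forall i, [exists x in T, x i] = y i)) => y; case: (boolP (y \in Y)) => yY; last by exists set0.
  by have [T TX hT] := hY y yY; exists T.
exists (\bigcup_(s in S) T s).
  apply/bigcupsP => s sS; by case: (hT s (subsetP SY s sS)).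
move=> i; rewrite -hS.
apply/existsP/existsP.
  move=> [x /andP[/bigcupP[s sS xT] xi]]; exists s; rewrite sS /=.
  have [_ h] := hT s (subsetP SY s sS); rewrite -h.
  by apply/existsP; exists x; rewrite xT.
move=> [s /andP[sS si]].
have [_ h] := hT s (subsetP SY s sS); move: si; rewrite -h => /existsP[x /andP[xT xi]].
by exists x; rewrite xi andbT; apply/bigcupP; exists s.
Qed.

Lemma bool_mono n (X Y : {set bvec n}) y : X \subset Y -> boolean_spans X y -> boolean_spans Y y.
Proof. by move=> XY [S SX h]; exists S => //; apply: subset_trans XY. Qed.

Lemma bool_refl n (X : {set bvec n}) x : x \in X -> boolean_spans X x.
Proof.
move=> xX; exists [set x]; first by rewrite sub1set.
move=> i; apply/existsP/idP; first by move=> [y /andP[]]; rewrite inE => /eqP->.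
by move=> xi; exists x; rewrite inE eqxx.
Qed.

Lemma bool_loc n (X : {set bvec n}) y : boolean_spans X y -> boolean_spans [set x in X | vle x y] y.
Proof.
move=> [S SX h]; exists S => //.
apply/subsetP => s sS; rewrite inE (subsetP SX s sS) /=.
apply/forallP => i; apply/implyP => si; rewrite -h; apply/existsP; exists s; by rewrite sS.
Qed.
Lemma sumb n (S : {set bvec n}) i :
  (\sum_(x in S) nat_of_bool (x i))%N = #|[set x in S | x i]|.
Proof.
rewrite -sum1_card big_mkcond [RHS]big_mkcond /=; apply: eq_bigr => x _.
by rewrite inE; case: (x \in S); case: (x i).
Qed.

Lemma bin_trans n (X Y : {set bvec n}) z :
  (forall y, y \in Y -> binary_spans X y) -> binary_spans Y z -> binary_spans X z.
Proof.
move=> hY [S SY hS].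
have [T hT] : exists T : bvec n -> {set bvec n}, forall y,
  y \in Y -> T y \subset X /\ forall i, #|[set x in T y | x i]| = nat_of_bool (y i).
  apply: (fin_all_exists (P := fun y (T : {set bvec n}) => y \in Y -> T \subset X /\ forall i, #|[set x in T | x i]| = nat_of_bool (y i))) => y.
  case: (boolP (y \in Y)) => yY; last by exists set0.
  by have [T TX hT] := hY y yY; exists T => _; split => // i; rewrite -hT sumb.
exists (\bigcup_(s in S) T s).
  apply/bigcupsP => s sS; by case: (hT s (subsetP SY s sS)).
move=> i; rewrite sumb.
have E : [set x in \bigcup_(s in S) T s | x i] =
         \bigcup_(s in [set s in S | s i]) [set x in T s | x i].
  apply/setP => x; rewrite inE; apply/andP/bigcupP.
    move=> [/bigcupP[s sS xT] xi]; exists s; last by rewrite inE xT.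
    rewrite inE sS /=.
    have [_ h] := hT s (subsetP SY s sS); move: (h i).
    case: (s i) => // /eqP; rewrite cards_eq0 => /eqP/setP/(_ x).
    by rewrite !inE xT xi.
  move=> [s]; rewrite !inE => /andP[sS _] /andP[xT xi]; split => //.
  by apply/bigcupP; exists s.
rewrite E; move: (hS i); rewrite sumb; case: (z i) => /= hc.
  have /cards1P[s0 P1] : #|[set s in S | s i]| == 1 by rewrite hc.
  have : s0 \in [set s in S | s i] by rewrite P1 inE.
  rewrite inE => /andP[s0S s0i].
  rewrite P1 big_set1; have [_ h] := hT s0 (subsetP SY s0 s0S); by rewrite h s0i.
have P0 : [set s in S | s i] = set0 by apply: cards0_eq.
by rewrite P0 big_set0 cards0.
Qed.

Lemma bin_mono n (X Y : {set bvec n}) y : X \subset Y -> binary_spans X y -> binary_spans Y y.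
Proof. by move=> XY [S SX h]; exists S => //; apply: subset_trans XY. Qed.

Lemma bin_refl n (X : {set bvec n}) x : x \in X -> binary_spans X x.
Proof.
move=> xX; exists [set x]; first by rewrite sub1set.
by move=> i; rewrite big_set1.
Qed.

Lemma bin_loc n (X : {set bvec n}) y : binary_spans X y -> binary_spans [set x in X | vle x y] y.
Proof.
move=> [S SX h]; exists S => //.
apply/subsetP => s sS; rewrite inE (subsetP SX s sS) /=.
apply/forallP => i; apply/implyP => si.
have := h i; rewrite (bigD1 s) //= si.
by case: (y i).
Qed.

Theorem mainTheorem15 (n m : nat) (A : 'M[bool]_(n, m)) :
  (forall B1 B2 : {set bvec n},
      spans_all_bases (@binary_spans n) A B1 ->
      spans_all_bases (@binary_spans n) A B2 -> B1 = B2) /\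
  (forall B1 B2 : {set bvec n},
      spans_all_bases (@boolean_spans n) A B1 ->
      spans_all_bases (@boolean_spans n) A B2 -> B1 = B2).
Proof.
split.
  apply: generic; [exact: bin_mono | exact: bin_refl | exact: bin_trans | exact: bin_loc].
apply: generic; [exact: bool_mono | exact: bool_refl | exact: bool_trans | exact: bool_loc].
Qed.
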